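(* Let $\Lambda=(I,\varphi_i,\gamma_{ij})$ be a direct system of formulas in a functional language $\mathcal{L}$. Suppose $\{\mathcal{B}_i: i\in I\}$ is a family of $\mathcal{L}$-algebras such that $\varphi_i$ can be realized in $\mathcal{B}_i$ for each $i\in I$. Then there is an ultrafilter $D$ over $I$ such that the limit algebra $L(\Lambda)$ embeds into the ultraproduct $\prod_{i\in I}\mathcal{B}_i/D$.
   Context: Functional language: operation symbols $F$ (arity $n_F$) and constants only. A diagram-formula in a finite reduct $\mathcal{L}'$ of $\mathcal{L}$ in a finite variable set $X$ is a conjunction of atomic formulas and negated atomic formulas of $\mathcal{L}'$ such that: $\neg(x=y)$ is a conjunct for all distinct $x,y\in X$; for each operation $F\in\mathcal{L}'$ and $(x_0,\dots,x_{n_F})\in X^{n_F+1}$ exactly one of $F(x_1,\dots,x_{n_F})=x_0$ and its negation is a conjunct; for each constant $c\in\mathcal{L}'$ and $x\in X$ exactly one of $x=c$, $\neg(x=c)$ is a conjunct. A direct system of formulas $\Lambda=(I,\varphi_i,\gamma_{ij})$: $(I,\le)$ a directed poset; for each $i$ a consistent diagram-formula $\varphi_i$ in a finite reduct $\mathcal{L}_i$ and finite variables $X_i$; maps $\gamma_{ij}:X_i\to X_j$ for $i\le j$ with $\gamma_{ii}=\mathrm{id}$, $\gamma_{jk}\circ\gamma_{ij}=\gamma_{ik}$, and every conjunct of $\varphi_i(\gamma_{ij}(X_i))$ a conjunct of $\varphi_j$; for every constant $c$ some $\varphi_i$ has a conjunct $x=c$ with $x\in X_i$; for every $F$, $i$,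 $(x_1,\dots,x_{n_F})\in X_i^{n_F}$ there is $j\ge i$ with a conjunct $F(\gamma_{ij}(x_1),\dots,\gamma_{ij}(x_{n_F}))=x_j$ in $\varphi_j$, $x_j\in X_j$. The limit algebra $L(\Lambda)$ has universe $\{(x,i):x\in X_i,i\in I\}/\!\equiv$, where $(x,i)\equiv(y,j)$ iff $\gamma_{ik}(x)=\gamma_{jk}(y)$ for some $k\ge i,j$; the constant $c$ is the class $\langle x,i\rangle$ of any $(x,i)$ with $x=c$ a conjunct of $\varphi_i$, and $F(\langle x_1,i_1\rangle,\dots,\langle x_{n_F},i_{n_F}\rangle)=\langle x_j,j\rangle$ for any $j\ge i_1,\dots,i_{n_F}$ such that $\varphi_j$ contains $F(\gamma_{i_1j}(x_1),\dots,\gamma_{i_{n_F}j}(x_{n_F}))=x_j$ (this is well defined). A formula $\varphi_i$ is realized in $\mathcal{B}$ if it is true in $\mathcal{B}$ under some assignment $X_i\to B$. *)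

(* Defs.v *)
From mathcomp Require Import all_boot.
From Stdlib Require List.
From Stdlib Require Import ClassicalEpsilon.

Set Implicit Arguments.
Unset Strict Implicit.
Unset Printing Implicit Defensive.

Record language := Language {
  lop : Type;
  lar : lop -> nat;
  lcst : Type
}.

(** An L-algebra (L-structure of a functional language); as usual in model
    theory the universe is nonempty. *)
Record algebra (L : language) := Algebra {
  acar :> Type;
  aop : forall F : lop L, ('I_(lar F) -> acar) -> acar;
  acst : lcst L -> acar;
  acar_inhabited : inhabited acar
}.

Arguments aop {L} a F _.
Arguments acst {L} a _.

Inductive term (L : language) (V : Type) : Type :=
| tvar : V -> term L V
| tcst : lcst L -> term L V
| tapp : forall F : lop L, ('I_(lar F) -> term L V) -> term L V.

Arguments tvar {L V} _.
Arguments tcst {L V} _.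
Arguments tapp {L V} F _.

(** A literal: an atomic formula [t1 = t2] (sign [true]) or its negation
    [~ (t1 = t2)] (sign [false]). *)
Inductive literal (L : language) (V : Type) : Type :=
| Lit : bool -> term L V -> term L V -> literal L V.

Arguments Lit {L V} _ _ _.

Definition lpos {L V} (t1 t2 : term L V) := Lit true t1 t2.
Definition lneg {L V} (t1 t2 : term L V) := Lit false t1 t2.

(** A conjunction of literals, represented by the list of its conjuncts. *)
Definition formula (L : language) (V : Type) := list (literal L V).

Definition conjunct {L V} (l : literal L V) (phi : formula L V) : Prop :=
  List.In l phi.

Fixpoint tmap {L : language} {V W : Type} (f : V -> W) (t : term L V)
  : term L W :=
  match t with
  | tvar v => tvar (f v)
  | tcst c => tcst c
  | tapp F args => tapp F (fun k => tmap f (args k))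
  end.

Definition lmap {L : language} {V W : Type} (f : V -> W) (l : literal L V)
  : literal L W :=
  match l with Lit b t1 t2 => Lit b (tmap f t1) (tmap f t2) end.

Fixpoint term_in {L : language} {V : Type}
  (ops : list (lop L)) (cs : list (lcst L)) (t : term L V) : Prop :=
  match t with
  | tvar _ => True
  | tcst c => List.In c cs
  | tapp F args => List.In F ops /\ forall k, term_in ops cs (args k)
  end.

Definition literal_in {L : language} {V : Type}
  (ops : list (lop L)) (cs : list (lcst L)) (l : literal L V) : Prop :=
  match l with Lit _ t1 t2 => term_in ops cs t1 /\ term_in ops cs t2 end.

Fixpoint eval {L : language} {V : Type} (A : algebra L) (s : V -> A)
  (t : term L V) : A :=
  match t with
  | tvar v => s v
  | tcst c => acst A c
  | tapp F args => aop A F (fun k => @eval L V A s (args k))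
  end.

Arguments eval {L V} A s t.

Definition sat_lit {L : language} {V : Type} (A : algebra L) (s : V -> A)
  (l : literal L V) : Prop :=
  match l with
  | Lit true t1 t2 => @eval L V A s t1 = @eval L V A s t2
  | Lit false t1 t2 => @eval L V A s t1 <> @eval L V A s t2
  end.

Arguments sat_lit {L V} A s l.

Definition sat {L : language} {V : Type} (A : algebra L) (s : V -> A)
  (phi : formula L V) : Prop :=
  forall l, conjunct l phi -> sat_lit A s l.

Arguments sat {L V} A s phi.

Definition realized {L : language} {V : Type} (A : algebra L)
  (phi : formula L V) : Prop :=
  exists s : V -> A, sat A s phi.

Definition consistent {L : language} {V : Type} (phi : formula L V) : Prop :=
  exists A : algebra L, realized A phi.

Definition exactly_one {L : language} {V : Type} (phi : formula L V)
  (t1 t2 : term L V) : Prop :=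
  (conjunct (lpos t1 t2) phi \/ conjunct (lneg t1 t2) phi) /\
  ~ (conjunct (lpos t1 t2) phi /\ conjunct (lneg t1 t2) phi).

Definition diagram_formula {L : language} (X : finType)
  (ops : list (lop L)) (cs : list (lcst L)) (phi : formula L X) : Prop :=
  (forall l, conjunct l phi -> literal_in ops cs l) /\
  (forall x y : X, x != y -> conjunct (lneg (tvar x) (tvar y)) phi) /\
  (forall F, List.In F ops ->
     forall (xs : 'I_(lar F) -> X) (x0 : X),
       exactly_one phi (tapp F (fun k => tvar (xs k))) (tvar x0)) /\
  (forall c, List.In c cs -> forall x : X,
       exactly_one phi (tvar x) (tcst c)).

Record direct_system (L : language) := DirectSystem {
  ds_I : Type;
  ds_le : ds_I -> ds_I -> Prop;
  ds_X : ds_I -> finType;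
  ds_ops : ds_I -> list (lop L);
  ds_csts : ds_I -> list (lcst L);
  ds_phi : forall i, formula L (ds_X i);
  ds_gamma : forall i j, ds_X i -> ds_X j     (* gamma_ij (used for i <= j) *)
}.

Arguments ds_I {L} d.
Arguments ds_le {L} d _ _.
Arguments ds_X {L} d _.
Arguments ds_ops {L} d _.
Arguments ds_csts {L} d _.
Arguments ds_phi {L} d i.
Arguments ds_gamma {L} _ {i j} _.

(** A directed poset (directed sets are nonempty). *)
Definition directed_poset (I : Type) (le : I -> I -> Prop) : Prop :=
  (forall i, le i i) /\
  (forall i j, le i j -> le j i -> i = j) /\
  (forall i j k, le i j -> le j k -> le i k) /\
  inhabited I /\
  (forall i j, exists k, le i k /\ le j k).

Definition is_direct_system {L : language} (Lam : direct_system L) : Prop :=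
  let I := ds_I Lam in
  let le := ds_le Lam in
  let X := ds_X Lam in
  let phi := ds_phi Lam in
  let g := @ds_gamma L Lam in
  directed_poset le /\
  (forall i, diagram_formula (ds_ops Lam i) (ds_csts Lam i) (phi i)) /\
  (forall i, consistent (phi i)) /\
  (forall i (x : X i), g i i x = x) /\
  (forall i j k, le i j -> le j k -> forall x : X i, g j k (g i j x) = g i k x) /\
  (forall i j, le i j -> forall l, conjunct l (phi i) ->
       conjunct (lmap (g i j) l) (phi j)) /\
  (forall c : lcst L, exists i (x : X i),
       conjunct (lpos (tvar x) (tcst c)) (phi i)) /\
  (forall (F : lop L) i (xs : 'I_(lar F) -> X i),
     exists j (xj : X j), le i j /\
       conjunct (lpos (tapp F (fun k => tvar (g i j (xs k)))) (tvar xj)) (phi j)).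

Definition quot (T : Type) (R : T -> T -> Prop) : Type :=
  {P : T -> Prop | exists t, P = R t}.

Definition qclass {T : Type} {R : T -> T -> Prop} (t : T) : quot R :=
  exist (fun P => exists t, P = R t) (R t) (ex_intro _ t erefl).

Definition qrepr {T : Type} {R : T -> T -> Prop} (q : quot R) : T :=
  proj1_sig (constructive_indefinite_description _ (proj2_sig q)).

Definition lim_pair {L} (Lam : direct_system L) := {i : ds_I Lam & ds_X Lam i}.

Definition lim_equiv {L} (Lam : direct_system L) (p q : lim_pair Lam) : Prop :=
  exists k, ds_le Lam (tag p) k /\ ds_le Lam (tag q) k /\
            ds_gamma Lam (tagged p) = ds_gamma Lam (tagged q) :> ds_X Lam k.

Arguments lim_equiv {L} Lam p q.

Definition lim_car {L} (Lam : direct_system L) := quot (lim_equiv Lam).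

Definition lim_class {L} (Lam : direct_system L) (i : ds_I Lam)
  (x : ds_X Lam i) : lim_car Lam :=
  qclass (existT _ i x).

Definition ultrafilter (I : Type) (D : (I -> Prop) -> Prop) : Prop :=
  D (fun _ => True) /\
  ~ D (fun _ => False) /\
  (forall A B : I -> Prop, (forall i, A i -> B i) -> D A -> D B) /\
  (forall A B : I -> Prop, D A -> D B -> D (fun i => A i /\ B i)) /\
  (forall A : I -> Prop, D A \/ D (fun i => ~ A i)).

Section Ultraproduct.
Context {L : language} {I : Type} (B : I -> algebra L) (D : (I -> Prop) -> Prop).

Definition up_eq (f g : forall i, B i) : Prop := D (fun i => f i = g i).

Definition up_car : Type := quot up_eq.

Definition up_cst (c : lcst L) : up_car :=
  qclass (fun i => acst (B i) c).

Definition up_op (F : lop L) (args : 'I_(lar F) -> up_car) : up_car :=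
  qclass (fun i => aop (B i) F (fun k => qrepr (args k) i)).

End Ultraproduct.

Arguments up_eq {L I} B D f g.
Arguments up_car {L I} B D.
Arguments up_cst {L I} B D c.
Arguments up_op {L I} B D F args.

(** The operations of L(Lambda) are given by the
    defining clauses of the paper: c^{L(Lambda)} = <x,i> whenever [x = c] is a
    conjunct of phi_i, and F(<x_1,i_1>,...,<x_n,i_n>) = <x_j,j> whenever
    j >= i_1..i_n and phi_j contains F(gamma_{i_1 j} x_1, ...) = x_j. *)
Definition lim_embedding {L : language} (Lam : direct_system L)
  (B : ds_I Lam -> algebra L) (D : (ds_I Lam -> Prop) -> Prop)
  (h : lim_car Lam -> up_car B D) : Prop :=
  (forall a b, h a = h b -> a = b) /\
  (forall (c : lcst L) i (x : ds_X Lam i),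
     conjunct (lpos (tvar x) (tcst c)) (ds_phi Lam i) ->
     h (lim_class x) = up_cst B D c) /\
  (forall (F : lop L) (j : ds_I Lam) (idx : 'I_(lar F) -> ds_I Lam)
          (xs : forall k, ds_X Lam (idx k)) (xj : ds_X Lam j),
     (forall k, ds_le Lam (idx k) j) ->
     conjunct (lpos (tapp F (fun k => tvar (ds_gamma Lam (xs k)))) (tvar xj))
              (ds_phi Lam j) ->
     h (lim_class xj) = up_op B D F (fun k => h (lim_class (xs k)))).
Arguments lim_embedding {L} Lam B D h.

(* Main.v *)
Require Import Defs.
From mathcomp Require Import all_boot.
From mathcomp Require Import boolp classical_sets filter.
From Stdlib Require Import ProofIrrelevance FunctionalExtensionality PropExtensionality ClassicalEpsilon Classical.

Lemma ultra_cones (I : Type) (le : I -> I -> Prop) :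
  directed_poset le -> exists D, ultrafilter D /\ forall i, D (fun l => le i l).
Proof.
move=> [Hr [_ [Ht [[i0] Hd]]]].
pose F := filter_from setT (fun i => (fun l => le i l)).
have FF : ProperFilter F.
  apply: filter_from_proper.
    apply: filter_fromT_filter; first by exists i0.
    move=> i j; have [k [hik hjk]] := Hd i j; exists k => l /= hkl.
    by split; apply: Ht hkl.
  by move=> i _; exists i.
have [G [GU sFG]] := ultraFilterLemma FF.
exists G; split; last first.
  by move=> i; apply: sFG; exists i.
split; first exact: filterT.
split; first exact: (filter_not_empty G).
split; first by move=> A C AC; apply: filterS.
split; first by move=> A C GA GC; exact: filterI.
by move=> A; exact: in_ultra_setVsetC.
Qed.
Section Q.
Variables (T : Type) (R : T -> T -> Prop).
Hypotheses (Rr : forall a, R a a) (Rs : forall a b, R a b -> R b a)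
  (Rt : forall a b c, R a b -> R b c -> R a c).

Lemma R_ext a b : R a b -> R a = R b.
Proof.
move=> hab; apply: functional_extensionality => c.
apply: propositional_extensionality; split => h.
  by apply: (Rt _ _ _ (Rs _ _ hab) h).
by apply: (Rt _ _ _ hab h).
Qed.

Lemma qclass_eqE a b : (qclass a = qclass b :> quot R) <-> R a b.
Proof.
split => h.
  have := f_equal (@proj1_sig _ _) h => /= e.
  by rewrite e; apply: Rr.
by apply: subset_eq_compat; apply: R_ext.
Qed.

Lemma qrepr_spec (q : quot R) : proj1_sig q = R (qrepr q).
Proof.
rewrite /qrepr; case: (constructive_indefinite_description _ _) => t /= ->.
by [].
Qed.

Lemma qclass_qrepr (q : quot R) : qclass (qrepr q) = q.
Proof.
case: q => P pf; rewrite /qclass; apply: subset_eq_compat.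
by have /= e := qrepr_spec (exist _ P pf); symmetry.
Qed.

Lemma qrepr_qclass a : R a (qrepr (qclass a : quot R)).
Proof.
have := qrepr_spec (qclass a) => /= ->; apply: Rr.
Qed.
End Q.
Arguments qrepr_qclass {T R}.
Arguments qclass_qrepr {T R}.
Arguments qclass_eqE {T R}.

Section Main.
Variables (L : language) (Lam : direct_system L).
Hypothesis HLam : is_direct_system Lam.
Variables (B : ds_I Lam -> algebra L).
Variable s : forall i, ds_X Lam i -> B i.
Hypothesis Hs : forall i, sat (B i) (s i) (ds_phi Lam i).
Variable D : (ds_I Lam -> Prop) -> Prop.
Hypothesis HD : ultrafilter D.
Hypothesis Hcone : forall i, D (fun l => ds_le Lam i l).
Set Implicit Arguments.
Unset Strict Implicit.

Notation le := (ds_le Lam).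
Local Notation g i j := (@ds_gamma L Lam i j).

Lemma le_refl i : le i i.
Proof. by case: HLam => [[?]]. Qed.
Lemma le_trans i j k : le i j -> le j k -> le i k.
Proof. by case: HLam => [[_ [_ [H _]]] _]; apply: H. Qed.
Lemma le_dir i j : exists k, le i k /\ le j k.
Proof. by case: HLam => [[_ [_ [_ [_ H]]]] _]; apply: H. Qed.
Lemma g_id i (x : ds_X Lam i) : g i i x = x.
Proof. by case: HLam => [_ [_ [_ [H _]]]]; apply: H. Qed.
Lemma g_comp i j k : le i j -> le j k -> forall x : ds_X Lam i, g j k (g i j x) = g i k x.
Proof. by case: HLam => [_ [_ [_ [_ [H _]]]]]; apply: H. Qed.
Lemma g_mono i j : le i j -> forall l, conjunct l (ds_phi Lam i) ->
       conjunct (lmap (g i j) l) (ds_phi Lam j).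
Proof. by case: HLam => [_ [_ [_ [_ [_ [H _]]]]]]; apply: H. Qed.
Lemma diag i : diagram_formula (ds_ops Lam i) (ds_csts Lam i) (ds_phi Lam i).
Proof. by case: HLam => [_ [H _]]. Qed.

Lemma DT : D (fun _ => True). Proof. by case: HD. Qed.
Lemma DF : ~ D (fun _ => False). Proof. by case: HD => _ []. Qed.
Lemma DS (P Q : ds_I Lam -> Prop) : (forall i, P i -> Q i) -> D P -> D Q.
Proof. by case: HD => _ [_ [H _]]; apply: H. Qed.
Lemma DI (P Q : ds_I Lam -> Prop) : D P -> D Q -> D (fun i => P i /\ Q i).
Proof. by case: HD => _ [_ [_ [H _]]]; apply: H. Qed.
Lemma Dex P : D P -> exists i, P i.
Proof.
move=> DP; apply: NNPP => hn; apply: DF; apply: DS DP => i Pi; apply: hn; by exists i.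
Qed.

Lemma D_all n (P : 'I_n -> ds_I Lam -> Prop) : (forall k, D (P k)) ->
  D (fun l => forall k, P k l).
Proof.
move=> HP.
suff H : forall r : seq 'I_n, D (fun l => forall k, k \in r -> P k l).
  by apply: DS (H (enum 'I_n)) => l Hl k; apply: Hl; rewrite mem_enum.
elim => [|a r IH]; first by apply: DS DT.
apply: DS (DI (HP a) IH) => l [Ha Hr] k; rewrite in_cons => /orP [/eqP -> //|].
exact: Hr.
Qed.

Lemma lim_refl p : lim_equiv Lam p p.
Proof. by exists (tag p); split; [apply: le_refl|split; [apply: le_refl|]]. Qed.
Lemma lim_sym p q : lim_equiv Lam p q -> lim_equiv Lam q p.
Proof. by move=> [k [h1 [h2 h3]]]; exists k. Qed.
Lemma lim_cone p q : lim_equiv Lam p q ->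
  exists k, forall l, le k l -> le (tag p) l /\ le (tag q) l /\
     g _ l (tagged p) = g _ l (tagged q).
Proof.
move=> [k [h1 [h2 h3]]]; exists k => l hl.
split; first exact: le_trans h1 hl.
split; first exact: le_trans h2 hl.
by rewrite -(g_comp h1 hl) -(g_comp h2 hl) h3.
Qed.
Lemma lim_trans p q r : lim_equiv Lam p q -> lim_equiv Lam q r -> lim_equiv Lam p r.
Proof.
move=> /lim_cone [k1 H1] /lim_cone [k2 H2].
have [k [hk1 hk2]] := le_dir k1 k2.
have [a [b c]] := H1 k hk1; have [a' [b' c']] := H2 k hk2.
by exists k; split => //; split => //; rewrite c c'.
Qed.

Lemma up_refl f : up_eq B D f f.
Proof. by apply: DS DT. Qed.
Lemma up_sym f f' : up_eq B D f f' -> up_eq B D f' f.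
Proof. by apply: DS. Qed.
Lemma up_trans f1 f2 f3 : up_eq B D f1 f2 -> up_eq B D f2 f3 -> up_eq B D f1 f3.
Proof. by move=> h1 h2; apply: DS (DI h1 h2) => l [-> ->]. Qed.

Definition fp (p : lim_pair Lam) : forall l, B l :=
  fun l => s l (g (tag p) l (tagged p)).

Definition h (q : lim_car Lam) : up_car B D := qclass (fp (qrepr q)).

Lemma fp_class i (x : ds_X Lam i) :
  D (fun l => le i l /\ fp (qrepr (lim_class x)) l = s l (g i l x)).
Proof.
have := qrepr_qclass (@lim_refl) (existT _ i x).
move=> /lim_cone [k Hk]; apply: DS (Hcone k) => l hl.
have [a [b c]] := Hk l hl; split => //.
by rewrite /fp -c.
Qed.

Lemma h_class_eq (q : lim_car Lam) f : up_eq B D (fp (qrepr q)) f -> h q = qclass f.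
Proof. by move=> H; apply/(qclass_eqE (@up_refl) (@up_sym) (@up_trans)). Qed.

Lemma s_inj l (u v : ds_X Lam l) : s l u = s l v -> u = v.
Proof.
move=> e; case: (eqVneq u v) => // /(proj1 (proj2 (diag l))) hc.
by case: (@Hs l _ hc e).
Qed.

Lemma h_inj a b : h a = h b -> a = b.
Proof.
move=> /(qclass_eqE (@up_refl) (@up_sym) (@up_trans)) E.
rewrite -(qclass_qrepr a)
        -(qclass_qrepr b).
apply/(qclass_eqE (@lim_refl) (@lim_sym) (@lim_trans)).
case: (qrepr a) E => i x; case: (qrepr b) => j y E.
have [k [hik hjk]] := le_dir i j.
have [l [hkl El]] := Dex (DI (Hcone k) E).
exists l; split; first exact: le_trans hik hkl.
split; first exact: le_trans hjk hkl.
exact: s_inj El.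
Qed.

Lemma h_cst (c : lcst L) i (x : ds_X Lam i) :
  conjunct (lpos (tvar x) (tcst c)) (ds_phi Lam i) ->
  h (lim_class x) = up_cst B D c.
Proof.
move=> hc; apply: h_class_eq.
apply: DS (fp_class x) => l [hl ->].
by have := @Hs _ _ (g_mono hl hc).
Qed.

Lemma h_op (F : lop L) (j : ds_I Lam) (idx : 'I_(lar F) -> ds_I Lam)
          (xs : forall k, ds_X Lam (idx k)) (xj : ds_X Lam j) :
     (forall k, le (idx k) j) ->
     conjunct (lpos (tapp F (fun k => tvar (g _ _ (xs k)))) (tvar xj))
              (ds_phi Lam j) ->
     h (lim_class xj) = up_op B D F (fun k => h (lim_class (xs k))).
Proof.
move=> hle hc; apply: h_class_eq.
have Hk : forall k, D (fun l => fp (qrepr (lim_class (xs k))) l =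
                      qrepr (h (lim_class (xs k))) l /\
                      le (idx k) l /\
                      fp (qrepr (lim_class (xs k))) l = s l (g _ l (xs k))).
  move=> k; have := qrepr_qclass (@up_refl)
                      (fp (qrepr (lim_class (xs k)))).
  move=> E; apply: DS (DI E (fp_class (xs k))) => l [e1 e2]; split => //.
apply: DS (DI (fp_class xj) (D_all Hk)) => l [[hjl ->] Hl].
have := @Hs _ _ (g_mono hjl hc) => /= <-.
congr (aop _ F); apply: functional_extensionality => k.
have [e1 [_ e3]] := Hl k.
by rewrite -e1 e3 g_comp.
Qed.

End Main.

Theorem mainTheorem10 (L : language) (Lam : direct_system L)
  (HLam : is_direct_system Lam)
  (B : ds_I Lam -> algebra L)
  (HB : forall i, realized (B i) (ds_phi Lam i)) :
  exists D : (ds_I Lam -> Prop) -> Prop,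
    ultrafilter D /\
    exists h : lim_car Lam -> up_car B D, lim_embedding Lam B D h.
Proof.
have [D [HD Hc]] := @ultra_cones _ _ (proj1 HLam : directed_poset (ds_le Lam)).
pose s i := proj1_sig (constructive_indefinite_description _ (HB i)).
have Hs : forall i, sat (B i) (s i) (ds_phi Lam i).
  by move=> i; rewrite /s; case: (constructive_indefinite_description _ _).
exists D; split => //; exists (h s D); split.
  by move=> a b hab; eapply h_inj; eauto.
split.
  by move=> c i x hc; eapply h_cst; eauto.
by move=> F j idx xs xj hle hc; eapply h_op; eauto.
Qed.
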